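(* Let $G$ be a $(P_3+P_1)$-free graph on $n$ vertices and let $\ell \ge \chi(G)+1$ be an integer. Then $\mathcal{R}_\ell(G)$ is connected and has diameter at most $6n$.
   Context: All graphs are finite and simple. A $k$-colouring of $G$ is a map $\alpha: V(G)\to\{1,\dots,k\}$ with $\alpha(u)\neq\alpha(v)$ for every edge $uv$; $\chi(G)$ is the chromatic number. The reconfiguration graph $\mathcal{R}_k(G)$ has the $k$-colourings of $G$ as vertices, two being adjacent if they differ on exactly one vertex. $G$ is $H$-free if it has no induced subgraph isomorphic to $H$; $P_3+P_1$ is the disjoint union of a path on 3 vertices and a single vertex. *)

(* Defs.v *)
From mathcomp Require Import all_boot.
Set Implicit Arguments. Unset Strict Implicit. Unset Printing Implicit Defensive.

Definition simple_graph (T : finType) (e : rel T) : Prop :=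
  symmetric e /\ irreflexive e.

(* k-colourings: maps into {1..k}, encoded as 'I_k, proper on every edge. *)
Definition proper_colouring (T : finType) (e : rel T) (k : nat)
  (a : {ffun T -> 'I_k}) : bool :=
  [forall u, forall v, e u v ==> (a u != a v)].

Definition colourable (T : finType) (e : rel T) (k : nat) : bool :=
  [exists a : {ffun T -> 'I_k}, proper_colouring e a].

Lemma colourable_card (T : finType) (e : rel T) :
  irreflexive e -> colourable e #|T|.
Proof.
move=> irr; apply/existsP; exists [ffun x => enum_rank x].
apply/forallP=> u; apply/forallP=> v; apply/implyP=> euv.
rewrite !ffunE; apply/negP=> /eqP /enum_rank_inj Huv.
by rewrite Huv irr in euv.
Qed.

Lemma colourable_exists (T : finType) (e : rel T) (irr : irreflexive e) :
  exists k, colourable e k.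
Proof. by exists #|T|; apply: colourable_card. Qed.

Definition chi (T : finType) (e : rel T) (irr : irreflexive e) : nat :=
  ex_minn (colourable_exists irr).

Definition recolour_adj (T : finType) (k : nat) (a b : {ffun T -> 'I_k}) : bool :=
  #|[set v | a v != b v]| == 1.

(* a walk in R_k(G) from a to b of length (size p): p lists the successive
   colourings after a, all proper, consecutive ones adjacent, ending at b *)
Definition recolour_walk (T : finType) (e : rel T) (k : nat)
  (a : {ffun T -> 'I_k}) (p : seq {ffun T -> 'I_k}) (b : {ffun T -> 'I_k}) : bool :=
  [&& path (@recolour_adj T k) a p, all (@proper_colouring T e k) p & last a p == b].

Definition has_induced_P3P1 (T : finType) (e : rel T) : Prop :=
  exists x y z w : T,
    uniq [:: x; y; z; w] /\ e x y /\ e y z /\ ~~ e x z /\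
    ~~ e w x /\ ~~ e w y /\ ~~ e w z.

Definition P3P1_free (T : finType) (e : rel T) : Prop := ~ has_induced_P3P1 e.

(* Main.v *)
Require Import Defs.
From mathcomp Require Import all_boot zify.
Set Implicit Arguments. Unset Strict Implicit. Unset Printing Implicit Defensive.


Section Walks.
Variables (T : finType) (e : rel T) (l : nat).
Hypothesis sym : symmetric e.
Hypothesis irr : irreflexive e.

Definition col := {ffun T -> 'I_l}.
Definition reach (g h : col) (n : nat) :=
  exists p : seq col, recolour_walk e g p h /\ size p <= n.

Lemma properP (g : col) :
  reflect (forall u v, e u v -> g u != g v) (proper_colouring e g).
Proof.
apply: (iffP forallP) => [H u v euv | H u].
  by have /forallP/(_ v)/implyP := H u; apply.
by apply/forallP => v; apply/implyP; apply: H.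
Qed.

Lemma reach_refl g : reach g g 0.
Proof. by exists [::]; rewrite /recolour_walk /= eqxx. Qed.

Lemma reach_le g h m n : reach g h m -> m <= n -> reach g h n.
Proof. by move=> [p [Hp Hs]] mn; exists p; split => //; apply: leq_trans mn. Qed.

Lemma reach_trans g h i m n : reach g h m -> reach h i n -> reach g i (m + n).
Proof.
move=> [p [/and3P [P1 A1 /eqP L1] S1]] [q [/and3P [P2 A2 /eqP L2] S2]].
exists (p ++ q); split; last by rewrite size_cat leq_add.
by rewrite /recolour_walk cat_path last_cat all_cat L1 P1 P2 A1 A2 L2 eqxx.
Qed.

Lemma recolour_adj_sym : symmetric (@recolour_adj T l).
Proof.
move=> a b; rewrite /recolour_adj.
suff -> : [set v | a v != b v] = [set v | b v != a v] by [].
by apply/setP => v; rewrite !inE eq_sym.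
Qed.

Lemma reach_sym g h n : proper_colouring e g -> reach g h n -> reach h g n.
Proof.
move=> pg [p [/and3P [P1 A1 /eqP L1] S1]].
exists (rev (belast g p)); split; last by rewrite size_rev size_belast.
apply/and3P; split.
- rewrite -L1 rev_path.
  by apply: sub_path P1 => x y; rewrite /= recolour_adj_sym.
- rewrite all_rev; apply/allP => x /mem_belast; rewrite inE.
  by case/orP => [/eqP -> // | xp]; apply: (allP A1).
- case: p {P1 S1} L1 A1 => [|x p] /= L1 A1; first by rewrite L1.
  by rewrite rev_cons last_rcons.
Qed.

Definition upd (g : col) (v : T) (b : 'I_l) : col :=
  [ffun u => if u == v then b else g u].

Lemma upd_proper g v b : proper_colouring e g ->
  (forall w, e v w -> g w != b) -> proper_colouring e (upd g v b).
Proof.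
move=> /properP pg Hb; apply/properP => x y exy; rewrite !ffunE.
case: (eqVneq x v) => [xv | xv]; case: (eqVneq y v) => [yv | yv].
- by subst; rewrite irr in exy.
- by subst; rewrite eq_sym; apply: Hb.
- by subst; apply: Hb; rewrite sym.
- exact: pg.
Qed.

Lemma reach_move g v b : proper_colouring e g ->
  (forall w, e v w -> g w != b) -> reach g (upd g v b) 1.
Proof.
move=> pg Hb; case: (eqVneq b (g v)) => [bv | bv].
  suff -> : upd g v b = g by apply: reach_le (reach_refl g) _.
  by apply/ffunP => u; rewrite ffunE; case: (eqVneq u v) => // ->.
exists [:: upd g v b]; split => //; rewrite /recolour_walk /= eqxx andbT.
rewrite upd_proper // andbT /recolour_adj.
suff -> : [set u | g u != upd g v b u] = [set v] by rewrite cards1.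
apply/setP => u; rewrite !inE ffunE; case: (eqVneq u v) => [-> | _].
  by rewrite eq_sym.
by rewrite eqxx.
Qed.

Definition setc (g : col) (X : {set T}) (y : 'I_l) : col :=
  [ffun u => if u \in X then y else g u].

Lemma reach_setc g (X : {set T}) (y : 'I_l) : proper_colouring e g ->
  (forall u w, u \in X -> w \in X -> ~~ e u w) ->
  (forall u w, u \in X -> e u w -> g w != y) ->
  reach g (setc g X y) #|X| /\ proper_colouring e (setc g X y).
Proof.
move=> pg; move Hn : #|X| => n; elim: n X Hn => [|n IH] X Hn Hind Hy.
  have -> : setc g X y = g.
    apply/ffunP => u; rewrite ffunE; case: ifP => // uX.
    by move/eqP: Hn; rewrite cards_eq0 => /eqP X0; rewrite X0 inE in uX.
  by split => //; apply: reach_refl.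
have [v vX] : exists v, v \in X.
  by apply/set0Pn; rewrite -card_gt0 Hn.
have HX' : #|X :\ v| = n by move: Hn; rewrite (cardsD1 v) vX add1n => -[].
have [R1 P1] := IH (X :\ v) HX' (fun u w uX wX => Hind u w (subsetP (subD1set X v) u uX) (subsetP (subD1set X v) w wX))
  (fun u w uX euw => Hy u w (subsetP (subD1set X v) u uX) euw).
have -> : setc g X y = upd (setc g (X :\ v) y) v y.
  by apply/ffunP => u; rewrite !ffunE !inE; case: (eqVneq u v) => [-> | uv] /=; rewrite ?vX.
have Hb : forall w, e v w -> setc g (X :\ v) y w != y.
  move=> w evw; rewrite ffunE !inE; case: ifP => [/andP [_ wX] | _].
    by have := Hind v w vX wX; rewrite evw.
  exact: Hy vX evw.
split.
  by have := reach_trans R1 (reach_move P1 Hb); rewrite addn1.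
exact: upd_proper P1 Hb.
Qed.

End Walks.


Lemma card_part_le (T A B : finType) (d1 : T -> A) (d2 : T -> B) (V : {set T}) :
  (forall u v, u \in V -> v \in V -> d1 u = d1 v -> d2 u = d2 v) ->
  #|d2 @: V| <= #|d1 @: V|.
Proof.
move=> H; case: (set_0Vmem V) => [-> | [v0 v0V]]; first by rewrite !imset0 !cards0.
pose h a := if [pick v in V | d1 v == a] is Some v then d2 v else d2 v0.
apply: (@leq_trans #|h @: (d1 @: V)|); last exact: leq_imset_card.
apply: subset_leq_card; apply/subsetP => b /imsetP [v vV ->].
apply/imsetP; exists (d1 v); first by apply/imsetP; exists v.
rewrite /h; case: pickP => [w /andP [wV /eqP dw] | /(_ v)]; last by rewrite vV eqxx.
by apply: H.
Qed.

Lemma card_part (T A B : finType) (d1 : T -> A) (d2 : T -> B) (V : {set T}) :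
  (forall u v, u \in V -> v \in V -> (d1 u == d1 v) = (d2 u == d2 v)) ->
  #|d1 @: V| = #|d2 @: V|.
Proof.
move=> H; apply/eqP; rewrite eqn_leq; apply/andP; split; apply: card_part_le.
- by move=> u v uV vV /eqP; rewrite -H // => /eqP.
- by move=> u v uV vV /eqP; rewrite H // => /eqP.
Qed.

Lemma card_imsetU (T A : finType) (d : T -> A) (X Y : {set T}) :
  (forall x y, x \in X -> y \in Y -> d x != d y) ->
  #|d @: (X :|: Y)| = #|d @: X| + #|d @: Y|.
Proof.
move=> H; rewrite imsetU cardsU.
suff -> : d @: X :&: d @: Y = set0 by rewrite cards0 subn0.
apply/setP => a; rewrite !inE; apply/negP => /andP [/imsetP [x xX ->] /imsetP [y yY]].
by apply/eqP; apply: H.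
Qed.

Lemma proper_ne (T : finType) (e : rel T) m (h : {ffun T -> 'I_m}) u v :
  proper_colouring e h -> e u v -> h u != h v.
Proof. by move=> /forallP /(_ u) /forallP /(_ v) /implyP; apply. Qed.

Section Main.
Variables (T : finType) (e : rel T) (l k : nat).
Hypothesis sym : symmetric e.
Hypothesis irr : irreflexive e.
Variable c : {ffun T -> 'I_k}.
Hypothesis pc : proper_colouring e c.

Local Notation col := (col T l).
Local Notation reach := (reach e).

Definition partition (V : {set T}) (g : col) :=
  forall u v, u \in V -> v \in V -> (g u == g v) = (c u == c v).

Definition Proc (V : {set T}) (n : nat) :=
  forall (g : col) (Pal : {set 'I_l}), proper_colouring e g ->
  (forall v, v \in V -> g v \in Pal) -> (forall v, v \notin V -> g v \notin Pal) ->
  #|c @: V| < #|Pal| ->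
  exists g' : col, [/\ reach g g' n, proper_colouring e g',
     (forall v, v \notin V -> g' v = g v), (forall v, v \in V -> g' v \in Pal)
     & partition V g'].

Lemma Proc_le V m n : Proc V m -> m <= n -> Proc V n.
Proof.
move=> P mn g Pal pg H1 H2 H3; have [g' [R P' O I Pa]] := P g Pal pg H1 H2 H3.
by exists g'; split => //; apply: reach_le R mn.
Qed.

Lemma join_step (X Y : {set T}) (a b : nat) :
  (forall x, x \in X -> x \notin Y) ->
  (forall x y, x \in X -> y \in Y -> e x y) ->
  Proc X a -> Proc Y b -> forall (g : col) (Pal : {set 'I_l}), proper_colouring e g ->
  (forall v, v \in X :|: Y -> g v \in Pal) -> (forall v, v \notin X :|: Y -> g v \notin Pal) ->
  #|c @: (X :|: Y)| < #|Pal| -> #|c @: X| < #|Pal :\: g @: Y| ->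
  exists g' : col, [/\ reach g g' (a + b), proper_colouring e g',
     (forall v, v \notin X :|: Y -> g' v = g v), (forall v, v \in X :|: Y -> g' v \in Pal)
     & partition (X :|: Y) g'].
Proof.
move=> dXY jXY PX PY g Pal pg H1 H2 H3 H4.
have cXY : forall x y, x \in X -> y \in Y -> c x != c y.
  by move=> x y xX yY; apply: proper_ne pc _; apply: jXY.
have gXY : forall (h : col), proper_colouring e h -> forall x y, x \in X -> y \in Y -> h x != h y.
  by move=> h ph x y xX yY; apply: proper_ne ph _; apply: jXY.
have A1 : forall v, v \in X -> g v \in Pal :\: g @: Y.
  move=> v vX; rewrite !inE H1 ?inE ?vX // andbT.
  by apply/imsetP => -[y yY /eqP]; apply/negP; apply: gXY.
have A2 : forall v, v \notin X -> g v \notin Pal :\: g @: Y.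
  move=> v vX; rewrite !inE negb_and negbK; case vY: (v \in Y).
    by rewrite (imset_f g vY).
  by rewrite H2 ?orbT // !inE negb_or vX vY.
have [g1 [R1 pg1 O1 I1 Pa1]] := PX g _ pg A1 A2 H4.
have cXY' := card_imsetU cXY.
have g1X : g1 @: X \subset Pal :\: g @: Y.
  by apply/subsetP => x /imsetP [v vX ->]; apply: I1.
have B1 : forall v, v \in Y -> g1 v \in Pal :\: g1 @: X.
  move=> v vY; have vX : v \notin X by apply/negP => /dXY; rewrite vY.
  rewrite !inE O1 // H1 ?inE ?vY ?orbT // andbT.
  apply/imsetP => -[x xX gv]; have := subsetP g1X (g1 x) (imset_f g1 xX).
  by rewrite !inE -gv (imset_f g vY).
have B2 : forall v, v \notin Y -> g1 v \notin Pal :\: g1 @: X.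
  move=> v vY; rewrite !inE negb_and negbK; case vX: (v \in X).
    by rewrite (imset_f g1 vX).
  by rewrite O1 ?vX // H2 ?orbT // !inE negb_or vX (negbTE vY).
have B3 : #|c @: Y| < #|Pal :\: g1 @: X|.
  rewrite cardsDS; last by apply: subset_trans g1X (subsetDl _ _).
  have -> : #|g1 @: X| = #|c @: X| by apply: card_part.
  by rewrite cXY' in H3; lia.
have [g2 [R2 pg2 O2 I2 Pa2]] := PY g1 _ pg1 B1 B2 B3.
exists g2; split.
- exact: reach_trans R1 R2.
- exact: pg2.
- move=> v; rewrite !inE negb_or => /andP [vX vY]; by rewrite O2 // O1.
- move=> v; rewrite inE => /orP [vX | vY]; last by have := I2 v vY; rewrite inE => /andP [].
  have vY : v \notin Y by apply: dXY.
  by rewrite O2 //; have := I1 v vX; rewrite inE => /andP [].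
- have sX : forall v, v \in X -> g2 v = g1 v.
    by move=> v vX; apply: O2; apply: dXY.
  have mixed : forall x y, x \in X -> y \in Y -> (g2 x == g2 y) = (c x == c y).
    move=> x y xX yY; rewrite (negbTE (cXY x y xX yY)) sX //.
    apply/negP => /eqP gx; have := I2 y yY; rewrite !inE -gx (imset_f g1 xX).
    by [].
  move=> u v; rewrite !inE => /orP [uX | uY] /orP [vX | vY].
  + by rewrite !sX // Pa1.
  + exact: mixed.
  + by rewrite eq_sym mixed // eq_sym.
  + exact: Pa2.
Qed.

Lemma join (X Y : {set T}) a b :
  (forall x, x \in X -> x \notin Y) -> (forall x y, x \in X -> y \in Y -> e x y) ->
  Proc X a -> Proc Y b -> Proc (X :|: Y) (a + b).
Proof.
move=> dXY jXY PX PY g Pal pg H1 H2 H3.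
have cXY : forall x y, x \in X -> y \in Y -> c x != c y.
  by move=> x y xX yY; apply: proper_ne pc _; apply: jXY.
have gXY : forall x y, x \in X -> y \in Y -> g x != g y.
  by move=> x y xX yY; apply: proper_ne pg _; apply: jXY.
have := card_imsetU cXY; have := card_imsetU gXY => gU cU.
have gP : g @: (X :|: Y) \subset Pal.
  by apply/subsetP => x /imsetP [v vV ->]; apply: H1.
have gXP : g @: X \subset Pal by apply: subset_trans gP; rewrite imsetU subsetUl.
have gYP : g @: Y \subset Pal by apply: subset_trans gP; rewrite imsetU subsetUr.
have := subset_leq_card gP; rewrite gU => gle.
case: (leqP #|g @: Y| #|c @: Y|) => hY.
  apply: join_step => //.
  rewrite cardsDS //; move: H3; rewrite cU => H3.
  rewrite ltn_subRL; apply: leq_ltn_trans H3; rewrite addnC leq_add2l //.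
have dYX : forall y, y \in Y -> y \notin X.
  by move=> y yY; apply/negP => /dXY; rewrite yY.
have jYX : forall y x, y \in Y -> x \in X -> e y x.
  by move=> y x yY xX; rewrite sym; apply: jXY.
have H1' : forall v, v \in Y :|: X -> g v \in Pal by move=> v; rewrite setUC; apply: H1.
have H2' : forall v, v \notin Y :|: X -> g v \notin Pal by move=> v; rewrite setUC; apply: H2.
have H3' : #|c @: (Y :|: X)| < #|Pal| by rewrite setUC.
have H4' : #|c @: Y| < #|Pal :\: g @: X|.
  rewrite cardsDS //; apply: leq_trans hY _.
  by rewrite leq_subRL ?(subset_leq_card gXP) // addnC.
have [g' [R P' O I Pa]] := join_step dYX jYX PY PX pg H1' H2' H3' H4'.
exists g'; split => //.
- by rewrite addnC.
- by move=> v; rewrite setUC; apply: O.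
- by move=> v; rewrite setUC; apply: I.
- by move=> u v; rewrite setUC; apply: Pa.
Qed.
End Main.


Section Pot.
Variables (T : finType) (e : rel T) (l : nat).
Local Notation col := (col T l).
Local Notation reach := (reach e).

Lemma pot_ind (Inv Fin : col -> Prop) (Phi : col -> nat) :
  (forall g, Inv g -> Fin g \/ exists g1 m, [/\ reach g g1 m, Inv g1, 0 < m & Phi g1 + m <= Phi g]) ->
  forall g, Inv g -> exists g', [/\ reach g g' (Phi g), Inv g' & Fin g'].
Proof.
move=> step g; have [n] := ubnP (Phi g); elim: n g => // n IH g.
rewrite ltnS => Hn Ig; case: (step g Ig) => [Fg | [g1 [m [R1 I1 m0 Hm]]]].
  by exists g; split => //; apply: reach_le (reach_refl e g) _.
have [|g' [R' I' F']] := IH g1 _ I1; first by lia.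
exists g'; split => //; have := reach_trans R1 R'.
by move/reach_le; apply; lia.
Qed.

Definition Phi (F : 'I_l -> T -> nat) (D : {set T}) (g : col) :=
  \sum_(u in D) F (g u) u.

Lemma Phi_setc F (D : {set T}) (g : col) (X : {set T}) y : X \subset D ->
  (forall u, u \in X -> F y u < F (g u) u) ->
  Phi F D (setc g X y) + #|X| <= Phi F D g.
Proof.
move=> XD H; rewrite /Phi.
have -> : #|X| = \sum_(u in D) (u \in X : nat).
  rewrite -big_mkcondr /= sum1_card; apply: eq_card => u.
  rewrite [in RHS]unfold_in /=.
  by case uX: (u \in X); rewrite ?andbT ?andbF ?(subsetP XD u uX).
rewrite -big_split /=; apply: leq_sum => u uD; rewrite ffunE.
by case: ifP => uX; [rewrite addn1; apply: H | rewrite addn0].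
Qed.

Lemma setc1 (g : col) v b : setc g [set v] b = upd g v b.
Proof. by apply/ffunP => u; rewrite !ffunE inE. Qed.

Lemma Phi_upd F (D : {set T}) (g : col) v b : v \in D -> F b v < F (g v) v ->
  Phi F D (upd g v b) + 1 <= Phi F D g.
Proof.
move=> vD H; rewrite -setc1 -(cards1 v); apply: Phi_setc.
  by rewrite sub1set.
by move=> u; rewrite inE => /eqP ->.
Qed.

Lemma Phi_le F (D : {set T}) (g : col) m : (forall u, u \in D -> F (g u) u <= m) ->
  Phi F D g <= m * #|D|.
Proof.
move=> H; rewrite /Phi -sum1_card big_distrr /=; apply: leq_sum => u uD.
by rewrite muln1; apply: H.
Qed.
End Pot.


Lemma inj_into (A B : finType) (S : {set A}) (P : {set B}) (y0 : B) :
  y0 \in P -> #|S| <= #|P| ->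
  exists s : A -> B, (forall i, i \in S -> s i \in P) /\ {in S &, injective s}.
Proof.
move=> y0P SP; exists (fun i => nth y0 (enum P) (index i (enum S))); split.
  move=> i iS; rewrite -mem_enum; apply: mem_nth; rewrite -cardE.
  by apply: (leq_trans _ SP); rewrite cardE index_mem mem_enum.
have Hi : forall x, x \in S -> index x (enum S) < size (enum P).
  by move=> x xS; rewrite -cardE; apply: (leq_trans _ SP); rewrite cardE index_mem mem_enum.
move=> i j iS jS /eqP; rewrite nth_uniq ?enum_uniq ?Hi //.
move/eqP => H; have := @index_inj _ i (enum S) i j; rewrite !mem_enum.
by apply.
Qed.

Section Cluster.
Variables (T : finType) (e : rel T) (l k : nat).
Hypothesis sym : symmetric e.
Hypothesis irr : irreflexive e.
Variable c : {ffun T -> 'I_k}.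
Hypothesis pc : proper_colouring e c.
Local Notation col := (col T l).
Local Notation reach := (reach e).

Variable K : {set T}.
Hypothesis clK : forall u w x, u \in K -> w \in K -> x \in K ->
  e u w -> e u x -> w != x -> e w x.
Variable Pal : {set 'I_l}.
Variable tg : T -> 'I_l.
Hypothesis tgP : forall v, v \in K -> tg v \in Pal.
Hypothesis tgI : forall u v, u \in K -> v \in K -> (tg u == tg v) = (c u == c v).
Hypothesis cK : #|c @: K| < #|Pal|.
Variable g0 : col.
Hypothesis g0out : forall v, v \notin K -> g0 v \notin Pal.

Definition clq v := [set w in K | (w == v) || e v w].
Definition phK (x : 'I_l) (v : T) : nat :=
  if x == tg v then 0 else if x \in tg @: clq v then 2 else 1.

Definition InvK (g : col) := [/\ proper_colouring e g, (forall v, v \in K -> g v \in Pal)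
  & (forall v, v \notin K -> g v = g0 v)].

Lemma clq_edge w x y : w \in K -> x \in clq w -> y \in clq w -> x != y -> e x y.
Proof.
move=> wK; rewrite !inE => /andP [xK /orP [/eqP -> | ewx]] /andP [yK /orP [/eqP -> | ewy]].
- by rewrite eqxx.
- by move=> _; exact: ewy.
- by move=> _; rewrite sym.
- by apply: clK ewx ewy.
Qed.

Lemma stepK g : InvK g -> (forall v, v \in K -> g v = tg v) \/
  exists g1 m, [/\ reach g g1 m, InvK g1, 0 < m & Phi phK K g1 + m <= Phi phK K g].
Proof.
case=> pg gin gout.
have outP : forall v, v \notin K -> g v \notin Pal by move=> v vK; rewrite gout //; apply: g0out.
have inK : forall b, g b \in Pal -> b \in K.
  by move=> b gb; apply/negPn/negP => /outP; rewrite gb.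
case: (boolP [forall v in K, g v == tg v]) => [/forall_inP H | /forall_inPn [v0 v0K nf0]].
  by left => v vK; apply/eqP; apply: H.
right.
case: (boolP [exists v in K, (g v != tg v) && [forall w, e v w ==> (g w != tg v)]]).
  case/exists_inP => v vK /andP [nfv /forallP Hv].
  have Hb : forall w, e v w -> g w != tg v by move=> w; apply/implyP/Hv.
  exists (upd g v (tg v)), 1; split => //.
  - exact: reach_move.
  - split; first exact: upd_proper.
      by move=> u uK; rewrite ffunE; case: eqP => _; [apply: tgP | apply: gin].
    by move=> u uK; rewrite ffunE; case: eqP => [uv | _]; [rewrite uv vK in uK | apply: gout].
  - apply: Phi_upd => //; rewrite /phK eqxx (negbTE nfv).
    by case: ifP.
move/exists_inPn => stuck.
have stk : forall x, x \in K -> g x != tg x -> exists b, e x b /\ g b = tg x.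
  move=> x xK nfx; have := stuck x xK; rewrite nfx /= => /forallPn [b].
  by rewrite negb_imply negbK => /andP [exb /eqP gb]; exists b.
have [w0 [ew0 gw0]] := stk v0 v0K nf0.
have w0K : w0 \in K by apply: inK; rewrite gw0 tgP.
set C := clq w0.
have v0C : v0 \in C by rewrite !inE v0K sym ew0 orbT.
have w0C : w0 \in C by rewrite !inE w0K eqxx.
have tgC : tg @: C \subset g @: C.
  apply/subsetP => t /imsetP [x xC ->].
  case: (eqVneq (g x) (tg x)) => [<- | nfx]; first by apply: imset_f.
  have xK : x \in K by move: xC; rewrite inE => /andP [].
  have [b [exb gb]] := stk x xK nfx.
  have bK : b \in K by apply: inK; rewrite gb tgP.
  rewrite -gb; apply: imset_f; rewrite !inE bK /=.
  move: xC; rewrite inE => /andP [_ /orP [/eqP xw | ewx]].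
    by rewrite -xw exb orbT.
  case: (eqVneq b w0) => //= bw.
  apply: (clK xK w0K bK) => //; first by rewrite sym.
  by rewrite eq_sym.
have cardC : #|g @: C| < #|Pal|.
  apply: leq_ltn_trans (leq_imset_card _ _) _; apply: leq_ltn_trans cK.
  rewrite -(card_in_imset (f := c)); last first.
    move=> x y xC yC cxy; apply/eqP; apply/negPn/negP => xy.
    by have := proper_ne pc (clq_edge w0K xC yC xy); rewrite cxy eqxx.
  apply: subset_leq_card; apply: imsetS; apply/subsetP => x.
  by rewrite inE => /andP [].
have [y yP yC] : exists2 y, y \in Pal & y \notin g @: C.
  apply/subsetPn; apply/negP => /subset_leq_card.
  by rewrite leqNgt cardC.
have nfw0 : g w0 != tg w0.
  rewrite gw0 tgI // ; apply: proper_ne pc _; exact: ew0.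
have Hb : forall b, e w0 b -> g b != y.
  move=> b eb; apply/negP => /eqP gb.
  have bK : b \in K by apply: inK; rewrite gb.
  by move: yC; rewrite -gb imset_f // !inE bK eb orbT.
exists (upd g w0 y), 1; split => //.
- exact: reach_move.
- split; first exact: upd_proper.
    by move=> u uK; rewrite ffunE; case: eqP => _; [apply: yP | apply: gin].
  by move=> u uK; rewrite ffunE; case: eqP => [uv | _]; [rewrite uv w0K in uK | apply: gout].
- apply: Phi_upd => //; rewrite /phK (negbTE nfw0) gw0 (imset_f tg v0C).
  have -> : (y == tg w0) = false.
    by apply/negP => /eqP yt; move: yC; rewrite yt (subsetP tgC) // imset_f.
  by rewrite -/C (negbTE (contra (subsetP tgC y) yC)).
Qed.

Lemma cluster_core : InvK g0 -> exists g', [/\ reach g0 g' (2 * #|K|), InvK g'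
  & forall v, v \in K -> g' v = tg v].
Proof.
move=> I0; have [g' [R I F]] := pot_ind stepK I0.
exists g'; split => //; apply: reach_le R _; apply: Phi_le => u _.
by rewrite /phK; case: ifP => //; case: ifP.
Qed.
End Cluster.

Lemma cluster_proc (T : finType) (e : rel T) (l k : nat) (sym : symmetric e)
  (irr : irreflexive e) (c : {ffun T -> 'I_k}) (pc : proper_colouring e c) (K : {set T}) :
  (forall u w x, u \in K -> w \in K -> x \in K -> e u w -> e u x -> w != x -> e w x) ->
  Proc e l c K (2 * #|K|).
Proof.
move=> clK g Pal pg H1 H2 H3.
have [y0 y0P] : exists y0, y0 \in Pal.
  by apply/set0Pn; rewrite -card_gt0; apply: leq_ltn_trans H3.
have [s [sP sI]] := inj_into y0P (ltnW H3).
pose tg v := s (c v).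
have tgP : forall v, v \in K -> tg v \in Pal by move=> v vK; apply: sP; apply: imset_f.
have tgI : forall u v, u \in K -> v \in K -> (tg u == tg v) = (c u == c v).
  move=> u v uK vK; rewrite /tg; apply/eqP/eqP => [|-> //].
  by apply: sI; apply: imset_f.
have I0 : InvK e K Pal g g by split.
have [g' [R [pg' I' O'] F]] := cluster_core sym irr pc clK tgP tgI H3 H2 I0.
exists g'; split => //.
- move=> u v uK vK; rewrite !F //; exact: tgI.
Qed.


Section Count.
Variables (T A : finType) (V : {set T}) (d : T -> A).
Hypothesis cl2 : forall p q r, p \in V -> q \in V -> r \in V -> d p = d q -> d p = d r ->
  [\/ p = q, p = r | q = r].

Definition sing (v : T) : bool := [forall t in V, (d t == d v) ==> (t == v)].

Lemma sum_sing : \sum_(v in V) (1 + sing v) = 2 * #|d @: V|.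
Proof.
rewrite (partition_big d (mem (d @: V))) /=; last by move=> v vV; apply: imset_f.
rewrite -sum1_card big_distrr /=; apply: eq_bigr => a /imsetP [p pV ->].
rewrite muln1.
case sp: (sing p).
  rewrite (big_pred1 p); first by rewrite sp.
  move=> v /=; case: (eqVneq v p) => [-> | vp]; first by rewrite pV eqxx.
  apply/negP => /andP [vV /eqP dv].
  by move/forall_inP: sp => /(_ v vV); rewrite dv eqxx (negbTE vp).
move/negbT/forall_inPn: sp => [q qV]; rewrite negb_imply => /andP [/eqP dq qp].
rewrite (bigD1 p) /=; last by rewrite pV eqxx.
rewrite (big_pred1 q) /=.
  have sq : sing q = false.
    by apply/negP => /forall_inP /(_ p pV); rewrite dq eqxx /= eq_sym (negbTE qp).
  have sp : sing p = false.
    by apply/negP => /forall_inP /(_ q qV); rewrite dq eqxx /= (negbTE qp).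
  by rewrite sq sp.
move=> v /=; case: (eqVneq v q) => [-> | vq]; first by rewrite qV dq eqxx qp.
case: (eqVneq v p) => [-> | vp]; first by rewrite andbF.
rewrite andbT; apply/negP => /andP [vV /eqP dv].
by case: (cl2 pV qV vV (esym dq) (esym dv)) => E; [move: qp | move: vp | move: vq]; rewrite E eqxx.
Qed.
End Count.

Lemma count_le (T A B : finType) (V : {set T}) (d1 : T -> A) (d2 : T -> B) :
  (forall p q r, p \in V -> q \in V -> r \in V -> d1 p = d1 q -> d1 p = d1 r -> [\/ p = q, p = r | q = r]) ->
  (forall p q r, p \in V -> q \in V -> r \in V -> d2 p = d2 q -> d2 p = d2 r -> [\/ p = q, p = r | q = r]) ->
  (forall v, v \in V -> sing V d1 v -> sing V d2 v) ->
  #|d1 @: V| <= #|d2 @: V|.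
Proof.
move=> c1 c2 H; rewrite -(leq_pmul2l (isT : 0 < 2)) -(sum_sing c1) -(sum_sing c2).
apply: leq_sum => v vV; rewrite leq_add2l.
by case: (sing V d1 v) (H v vV) => // ->.
Qed.


Section Small.
Variables (T : finType) (e : rel T) (l k : nat).
Hypothesis sym : symmetric e.
Hypothesis irr : irreflexive e.
Variable c : {ffun T -> 'I_k}.
Hypothesis pc : proper_colouring e c.
Local Notation col := (col T l).
Local Notation reach := (reach e).

Variable V : {set T}.
Hypothesis noT : forall x y z, x \in V -> y \in V -> z \in V ->
  x != y -> x != z -> y != z -> [|| e x y, e x z | e y z].
Variable Pal : {set 'I_l}.
Hypothesis cV : #|c @: V| < #|Pal|.
Variable g0 : col.
Hypothesis g0out : forall v, v \notin V -> g0 v \notin Pal.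

Lemma cl2 m (d : {ffun T -> 'I_m}) : proper_colouring e d ->
  forall p q r, p \in V -> q \in V -> r \in V -> d p = d q -> d p = d r ->
  [\/ p = q, p = r | q = r].
Proof.
move=> pd p q r pV qV rV dpq dpr.
case: (eqVneq p q) => [|pq]; first by constructor 1.
case: (eqVneq p r) => [|pr]; first by constructor 2.
case: (eqVneq q r) => [|qr]; first by constructor 3.
have := noT pV qV rV pq pr qr.
have ne : forall x y, d x = d y -> e x y = false.
  by move=> x y dxy; apply/negP => /(proper_ne pd); rewrite dxy eqxx.
by rewrite ne // ne // ne // -dpq.
Qed.

Definition InvA (g : col) := [/\ proper_colouring e g, (forall v, v \in V -> g v \in Pal)
  & (forall v, v \notin V -> g v = g0 v)].

Definition dn (g : col) v := [forall u in V, (g u == g v) == (c u == c v)].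

Lemma dnP (g : col) v : reflect (forall u, u \in V -> (g u == g v) = (c u == c v)) (dn g v).
Proof.
apply: (iffP forall_inP) => H u uV.
  by have /eqP := H u uV.
by rewrite H // eqxx.
Qed.

Definition PhiA (g : col) := #|[set v in V | ~~ dn g v]|.

Lemma PhiA_dec (g g1 : col) (N : {set T}) :
  (forall z, z \in N -> z \in V /\ ~~ dn g z) ->
  (forall z, z \in V -> dn g z -> dn g1 z) -> (forall z, z \in N -> dn g1 z) ->
  PhiA g1 + #|N| <= PhiA g.
Proof.
move=> HN Hd H1; rewrite /PhiA.
have sub : [set v in V | ~~ dn g1 v] \subset [set v in V | ~~ dn g v] :\: N.
  apply/subsetP => z; rewrite !inE => /andP [zV nz]; rewrite zV /=.
  apply/andP; split.
    by apply/negP => zN; move: nz; rewrite H1.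
  by apply/negP => dz; move: nz; rewrite Hd.
have NS : N \subset [set v in V | ~~ dn g v].
  by apply/subsetP => z zN; rewrite inE; have [-> ->] := HN z zN.
have := subset_leq_card sub; rewrite cardsDS // => H.
have := subset_leq_card NS; lia.
Qed.

Lemma stepA g : InvA g -> (forall v, v \in V -> dn g v) \/
  exists g1 m, [/\ reach g g1 m, InvA g1, 0 < m & PhiA g1 + m <= PhiA g].
Proof.
case=> pg gin gout.
have outP : forall v, v \notin V -> g v \notin Pal by move=> v vV; rewrite gout //; apply: g0out.
have inV : forall b, g b \in Pal -> b \in V.
  by move=> b gb; apply/negPn/negP => /outP; rewrite gb.
have clg := cl2 pg; have clc := cl2 pc.
have nee : forall (m : nat) (d : {ffun T -> 'I_m}), proper_colouring e d -> forall x y, d x = d y -> e x y = false.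
  by move=> m d pd x y dxy; apply/negP => /(proper_ne pd); rewrite dxy eqxx.
case: (boolP [forall v in V, dn g v]) => [/forall_inP H | /forall_inPn [v vV nv]].
  by left.
right.
case: (boolP [exists v in V, exists u in V, [&& ~~ dn g v, u != v, c u == c v &
    [forall t in V, (g t == g u) ==> (t == u)]]]).
  case/exists_inP => {}v {}vV /exists_inP [u uV /and4P [{}nv uv /eqP cuv /forall_inP su]].
  have su' : forall t, t \in V -> g t = g u -> t = u by move=> t tV /eqP gt; apply/eqP; apply: (implyP (su t tV)).
  have Hb : forall w, e v w -> g w != g u.
    move=> w evw; apply/negP => /eqP gw.
    have wV : w \in V by apply: inV; rewrite gw gin.
    by move: evw; rewrite (su' w wV gw) (nee _ _ pc _ _ (esym cuv)).
  exists (upd g v (g u)), 1; split => //.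
  - exact: reach_move.
  - split; first exact: upd_proper.
      by move=> t tV; rewrite ffunE; case: eqP => _; [apply: gin | apply: gin].
    by move=> t tV; rewrite ffunE; case: eqP => [tv | _]; [rewrite tv vV in tV | apply: gout].
  - rewrite -(cards1 v); apply: PhiA_dec.
    + by move=> z; rewrite inE => /eqP ->.
    + move=> z zV dz; have zv : z != v by apply: contraTneq dz => ->.
      have zu : z != u.
        apply: contraTneq dz => ->; apply/dnP => /(_ v vV).
        case: (eqVneq (g v) (g u)) => [gvu | gvu]; first by rewrite (su' v vV gvu) eqxx in uv.
        by rewrite cuv eqxx.
      apply/dnP => t tV; rewrite !ffunE (negbTE zv).
      case: (eqVneq t v) => [-> | tv]; last by move/dnP: dz; apply.
      case: (eqVneq (g u) (g z)) => [guz | guz]; first by rewrite (su' z zV (esym guz)) eqxx in zu.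
      apply/esym/negbTE/negP => /eqP cvz.
      by case: (clc u v z uV vV zV cuv (etrans cuv cvz)) => E; [move: uv | move: zu | move: zv]; rewrite E eqxx.
    + move=> z; rewrite inE => /eqP ->; apply/dnP => t tV; rewrite !ffunE eqxx.
      case: (eqVneq t v) => [-> | tv]; first by rewrite !eqxx.
      case: (eqVneq t u) => [-> | tu]; first by rewrite eqxx cuv eqxx.
      case: (eqVneq (g t) (g u)) => [gtu | _]; first by rewrite (su' t tV gtu) eqxx in tu.
      apply/esym/negbTE/negP => /eqP ctv.
      by case: (clc u v t uV vV tV cuv (etrans cuv (esym ctv))) => E; [move: uv | move: tu | move: tv]; rewrite E eqxx.
move/exists_inPn => stuck.
have stuck' : forall v u, v \in V -> u \in V -> ~~ dn g v -> u != v -> c u = c v ->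
    exists2 t, t \in V & (g t == g u) && (t != u).
  move=> v' u vV' uV nv' uv cuv; have := stuck v' vV'; move/exists_inPn => /(_ u uV).
  rewrite nv' uv cuv eqxx /= => /forall_inPn [t tV]; rewrite negb_imply => H.
  by exists t.
have [x xP xfree] : exists2 x, x \in Pal & forall t, t \in V -> g t != x.
  have cnt : #|g @: V| <= #|c @: V|.
    apply: count_le; [exact: clg | exact: clc |].
    move=> u uV /forall_inP su; apply/forall_inP => t tV; apply/implyP => /eqP ctu.
    apply/negPn/negP => tu.
    have nt : ~~ dn g t.
      apply/negP => /dnP /(_ u uV); rewrite ctu eqxx.
      by move/eqP => gut; move: (su t tV); rewrite gut eqxx /= (negbTE tu).
    have ut : u != t by rewrite eq_sym.
    have [w wV /andP [/eqP gw wu]] := stuck' t u tV uV nt ut (esym ctu).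
    by move: (su w wV); rewrite gw eqxx /= (negbTE wu).
  have : ~~ (Pal \subset g @: V).
    apply/negP => /subset_leq_card; rewrite leqNgt.
    by move/negP; apply; apply: leq_ltn_trans cV.
  case/subsetPn => x xP xn; exists x => // t tV; apply/negP => /eqP gt.
  by move: xn; rewrite -gt imset_f.
have xfree' : forall t, g t != x.
  move=> t; case: (boolP (t \in V)) => [tV | tV]; first exact: xfree.
  by apply/negP => /eqP gt; have := outP t tV; rewrite gt xP.
case: (boolP [forall t in V, (c t == c v) ==> (t == v)]) => [/forall_inP cs | /forall_inPn [u uV]].
  have cs' : forall t, t \in V -> c t = c v -> t = v.
    by move=> t tV /eqP ctv; apply/eqP; apply: (implyP (cs t tV)).
  exists (upd g v x), 1; split => //.
  - by apply: reach_move => // w _; apply: xfree'.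
  - split; first by apply: upd_proper => // w _; apply: xfree'.
      by move=> t tV; rewrite ffunE; case: eqP => _; [apply: xP | apply: gin].
    by move=> t tV; rewrite ffunE; case: eqP => [tv | _]; [rewrite tv vV in tV | apply: gout].
  - rewrite -(cards1 v); apply: PhiA_dec.
    + by move=> z; rewrite inE => /eqP ->.
    + move=> z zV dz; have zv : z != v by apply: contraTneq dz => ->.
      apply/dnP => t tV; rewrite !ffunE (negbTE zv).
      case: (eqVneq t v) => [-> | tv]; last by move/dnP: dz; apply.
      rewrite eq_sym (negbTE (xfree' z)); apply/esym/negbTE/negP => /eqP cvz.
      by move: zv; rewrite (cs' z zV (esym cvz)) eqxx.
    + move=> z; rewrite inE => /eqP ->; apply/dnP => t tV; rewrite !ffunE eqxx.
      case: (eqVneq t v) => [-> | tv]; first by rewrite !eqxx.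
      rewrite (negbTE (xfree' t)); apply/esym/negbTE/negP => /eqP ctv.
      by move: tv; rewrite (cs' t tV ctv) eqxx.
rewrite negb_imply => /andP [/eqP cuv uv].
have [w wV /andP [/eqP gwu wu]] := stuck' v u vV uV nv uv cuv.
have vdone : g v = g u -> dn g v.
  move=> gvu; apply/dnP => t tV.
  case: (eqVneq t v) => [-> | tv]; first by rewrite !eqxx.
  case: (eqVneq t u) => [-> | tu]; first by rewrite gvu cuv !eqxx.
  have -> : (g t == g v) = false.
    apply/negP => /eqP gtv.
    by case: (clg v u t vV uV tV gvu (esym gtv)) => E; [move: uv | move: tv | move: tu]; rewrite E eqxx.
  apply/esym/negP => /eqP ctv.
  by case: (clc v u t vV uV tV (esym cuv) (esym ctv)) => E; [move: uv | move: tv | move: tu]; rewrite E eqxx.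
have wv : w != v.
  by apply/negP => /eqP wv; subst w; rewrite (vdone gwu) in nv.
have nu : ~~ dn g u.
  by apply/negP => /dnP /(_ v vV); rewrite cuv eqxx => /eqP gvu; rewrite (vdone gvu) in nv.
pose g1 := upd g w x.
pose g2 := upd g1 v (g u).
have pg1 : proper_colouring e g1 by apply: upd_proper => // b _; apply: xfree'.
have Hb2 : forall b, e v b -> g1 b != g u.
  move=> b evb; rewrite ffunE; case: (eqVneq b w) => [_ | bw].
    by rewrite eq_sym xfree'.
  apply/negP => /eqP gbu; have bV : b \in V by apply: inV; rewrite gbu gin.
  case: (clg u b w uV bV wV (esym gbu) (esym gwu)) => E.
  - by move: evb; rewrite -E (nee _ _ pc _ _ (esym cuv)).
  - by move: wu; rewrite E eqxx.
  - by move: bw; rewrite E eqxx.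
have g2E : forall t, g2 t = if t == v then g u else if t == w then x else g t.
  by move=> t; rewrite !ffunE.
have cwv : c w != c v.
  apply/negP => /eqP cw.
  by case: (clc w u v wV uV vV (etrans cw (esym cuv)) cw) => E; [move: wu | move: wv | move: uv]; rewrite E eqxx.
have dv2 : dn g2 v.
  apply/dnP => t tV; rewrite !g2E eqxx.
  case: (eqVneq t v) => [-> | tv]; first by rewrite !eqxx.
  case: (eqVneq t w) => [-> | tw]; first by rewrite (negbTE cwv) eq_sym (negbTE (xfree' u)).
  case: (eqVneq t u) => [-> | tu]; first by rewrite cuv !eqxx.
  have -> : (g t == g u) = false.
    apply/negP => /eqP gtu.
    by case: (clg t u w tV uV wV gtu (etrans gtu (esym gwu))) => E; [move: tu | move: tw | move: wu]; rewrite E ?eqxx // eq_sym E eqxx.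
  apply/esym/negP => /eqP ctv.
  by case: (clc v u t vV uV tV (esym cuv) (esym ctv)) => E; [move: uv | move: tv | move: tu]; rewrite E eqxx.
have du2 : dn g2 u.
  have uw : u != w by rewrite eq_sym.
  have g2u : g2 u = g2 v by rewrite !g2E eqxx (negbTE uv) (negbTE uw).
  apply/dnP => t tV; have := dnP _ _ dv2 t tV.
  by rewrite g2u cuv.
exists g2, 2; split => //.
- have R1 : reach g g1 1 by apply: reach_move => // b _; apply: xfree'.
  have R2 : reach g1 g2 1 by apply: reach_move.
  exact: reach_trans R1 R2.
- split; first exact: upd_proper.
    by move=> t tV; rewrite g2E; case: eqP => _; [apply: gin | case: eqP => _; [apply: xP | apply: gin]].
  move=> t tV; rewrite g2E; case: eqP => [tv | _]; first by rewrite tv vV in tV.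
  by case: eqP => [tw | _]; [rewrite tw wV in tV | apply: gout].
- have -> : 2 = #|[set u; v]| by rewrite cards2 uv.
  apply: PhiA_dec.
  + by move=> z; rewrite !inE => /orP [/eqP -> | /eqP ->]; split.
  + move=> z zV dz; have zv : z != v by apply: contraTneq dz => ->.
    have zu : z != u by apply: contraTneq dz => ->.
    have zw : z != w.
      apply: contraTneq dz => -> {z zV zv zu}; apply/negP => /dnP /(_ u uV).
      by rewrite gwu eqxx cuv eq_sym (negbTE cwv).
    have guz : g u != g z.
      apply/negP => /eqP guz.
      by case: (clg z u w zV uV wV (esym guz) (etrans (esym guz) (esym gwu))) => E; [move: zu | move: zw | move: wu]; rewrite E eqxx.
    have cvz : c v != c z.
      apply/negP => /eqP cvz.
      by case: (clc v u z vV uV zV (esym cuv) cvz) => E; [move: uv | move: zv | move: zu]; rewrite E eqxx.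
    apply/dnP => t tV; rewrite !g2E (negbTE zv) (negbTE zw).
    case: (eqVneq t v) => [-> | tv]; first by rewrite (negbTE guz) (negbTE cvz).
    case: (eqVneq t w) => [-> | tw]; last by move/dnP: dz; apply.
    rewrite eq_sym (negbTE (xfree' z)); have := dnP _ _ dz w wV.
    by rewrite gwu (negbTE guz) => <-.
  + by move=> z; rewrite !inE => /orP [/eqP -> | /eqP ->].
Qed.

Lemma small_core : InvA g0 -> exists g', [/\ reach g0 g' #|V|, InvA g'
  & forall v, v \in V -> dn g' v].
Proof.
move=> I0; have [g' [R I F]] := pot_ind stepA I0.
exists g'; split => //; apply: reach_le R _.
by rewrite /PhiA; apply: subset_leq_card; apply/subsetP => v; rewrite inE => /andP [].
Qed.
End Small.

Lemma small_proc (T : finType) (e : rel T) (l k : nat) (sym : symmetric e)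
  (irr : irreflexive e) (c : {ffun T -> 'I_k}) (pc : proper_colouring e c) (V : {set T}) :
  (forall x y z, x \in V -> y \in V -> z \in V ->
     x != y -> x != z -> y != z -> [|| e x y, e x z | e y z]) ->
  Proc e l c V #|V|.
Proof.
move=> noT g Pal pg H1 H2 H3.
have I0 : InvA e V Pal g g by split.
have [g' [R [pg' I' O'] F]] := small_core sym irr pc noT H3 H2 I0.
exists g'; split => //.
move=> u v uV vV; exact: (elimT (dnP _ _ _ _) (F v vV) u uV).
Qed.


Section Decomp.
Variables (T : finType) (e : rel T).
Hypothesis sym : symmetric e.
Hypothesis irr : irreflexive e.
Hypothesis free : P3P1_free e.

Lemma noP a v b d : uniq [:: a; v; b; d] -> e a v -> e v b -> ~~ e a b ->
  ~~ e d a -> ~~ e d v -> ~~ e d b -> False.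
Proof.
move=> u h1 h2 h3 h4 h5 h6; apply: free.
by exists a, v, b, d.
Qed.

Lemma uniq4 (a v b d : T) : a != v -> a != b -> a != d -> v != b -> v != d -> b != d ->
  uniq [:: a; v; b; d].
Proof.
move=> h1 h2 h3 h4 h5 h6; rewrite /= !inE !negb_or.
by rewrite h1 h2 h3 h4 h5 h6.
Qed.

Definition ind3 a b d := [&& a != b, a != d & b != d] && [&& ~~ e a b, ~~ e a d & ~~ e b d].

Lemma ind3P a b d : reflect ([/\ a != b, a != d & b != d] /\ [/\ ~~ e a b, ~~ e a d & ~~ e b d]) (ind3 a b d).
Proof.
apply: (iffP andP) => [[/and3P [h1 h2 h3] /and3P [h4 h5 h6]] | [[h1 h2 h3] [h4 h5 h6]]].
  by split.
by split; apply/and3P; split.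
Qed.

Lemma ind3_12 a b d : ind3 a b d -> ind3 b a d.
Proof. by case/ind3P => [[h1 h2 h3] [h4 h5 h6]]; apply/ind3P; split; split; by [|rewrite eq_sym|rewrite sym]. Qed.
Lemma ind3_23 a b d : ind3 a b d -> ind3 a d b.
Proof. by case/ind3P => [[h1 h2 h3] [h4 h5 h6]]; apply/ind3P; split; split; by [|rewrite eq_sym|rewrite sym]. Qed.

Definition ct v s := (v == s) || e v s.

Variables (V : {set T}) (x y z : T).
Hypothesis xV : x \in V.
Hypothesis yV : y \in V.
Hypothesis zV : z \in V.
Hypothesis Ixyz : ind3 x y z.

Definition S3 := [:: x; y; z].
Definition Fs := [set v in V | [&& e v x, e v y & e v z]].
Definition Ks := V :\: Fs.

Lemma S3ind a b : a \in S3 -> b \in S3 -> ~~ e a b.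
Proof.
move: Ixyz => /ind3P [_ [exy exz eyz]].
rewrite !inE => /or3P [] /eqP -> /or3P [] /eqP ->; by [rewrite irr|rewrite sym|].
Qed.

Lemma others s : s \in S3 -> exists t1 t2, [/\ ind3 s t1 t2, t1 \in S3 & t2 \in S3].
Proof.
rewrite !inE => /or3P [/eqP -> | /eqP -> | /eqP ->].
- by exists y, z; rewrite !inE !eqxx ?orbT.
- by exists x, z; rewrite !inE !eqxx ?orbT; split => //; apply: ind3_12.
- by exists x, y; rewrite !inE !eqxx ?orbT; split => //; apply: ind3_12; apply: ind3_23.
Qed.

Lemma third a b : a \in S3 -> b \in S3 -> a != b ->
  exists d, ind3 a b d /\ (forall s, s \in S3 -> [|| s == a, s == b | s == d]).
Proof.
have I1 := Ixyz; have I2 := ind3_12 I1; have I3 := ind3_23 I1.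
have I4 := ind3_12 I3; have I5 := ind3_23 I2; have I6 := ind3_12 I5.
move: (I1) => /ind3P [[xy xz yz] _].
rewrite !inE => /or3P [/eqP -> | /eqP -> | /eqP ->] /or3P [/eqP -> | /eqP -> | /eqP ->];
  rewrite ?eqxx // => _.
- by exists z; split => // s; rewrite !inE => /or3P [] ->; rewrite ?orbT.
- by exists y; split => // s; rewrite !inE => /or3P [] ->; rewrite ?orbT.
- by exists z; split => // s; rewrite !inE => /or3P [] ->; rewrite ?orbT.
- by exists x; split => // s; rewrite !inE => /or3P [] ->; rewrite ?orbT.
- by exists y; split => // s; rewrite !inE => /or3P [] ->; rewrite ?orbT.
- by exists x; split => // s; rewrite !inE => /or3P [] ->; rewrite ?orbT.
Qed.

Lemma nct v s : ~~ ct v s -> (v != s) /\ ~~ e v s.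
Proof. by rewrite /ct negb_or => /andP. Qed.

Lemma full v a b d : ind3 a b d -> ct v a -> ct v b -> [/\ e v a, e v b & e v d].
Proof.
case/ind3P => [[ab ad bd] [eab ead ebd]] ca cb.
have va : v != a.
  by apply/negP => /eqP va; subst v; move: cb; rewrite /ct (negbTE ab) (negbTE eab).
have vb : v != b.
  by apply/negP => /eqP vb; subst v; move: ca; rewrite /ct eq_sym (negbTE ab) sym (negbTE eab).
move: ca cb; rewrite /ct (negbTE va) (negbTE vb) /= => eva evb; split => //.
apply/negPn/negP => nvd.
have vd : v != d by apply/negP => /eqP vd; subst v; move: eva; rewrite sym (negbTE ead).
apply: (noP (a := a) (v := v) (b := b) (d := d)).
- by apply: uniq4; by [|rewrite eq_sym].
- by [|rewrite sym].
- exact: evb.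
- exact: eab.
- by [|rewrite sym].
- by [|rewrite sym].
- by [|rewrite sym].
Qed.

Lemma K_one v a b : v \in Ks -> a \in S3 -> b \in S3 -> a != b -> ct v a -> ct v b -> False.
Proof.
move=> vK aS bS ab ca cb; have [d [I cov]] := third aS bS ab.
have [eva evb evd] := full I ca cb.
move: vK; rewrite !inE => /andP [/negP nF vV]; apply: nF; rewrite vV /=.
have H : forall s, s \in S3 -> e v s.
  by move=> s /cov /or3P [] /eqP ->.
by rewrite !H // !inE eqxx ?orbT.
Qed.

Lemma K_nc v : v \in Ks -> exists a b d, [/\ ind3 a b d, a \in S3, b \in S3, ~~ ct v a & ~~ ct v b].
Proof.
move=> vK; have I1 := Ixyz; move: (I1) => /ind3P [[xy xz yz] _].
have S1 : x \in S3 by rewrite !inE eqxx.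
have S2 : y \in S3 by rewrite !inE eqxx orbT.
have S0 : z \in S3 by rewrite !inE eqxx !orbT.
case cx: (ct v x).
  exists y, z, x; split => //.
  - by apply: ind3_23; apply: ind3_12; exact: I1.
  - by apply/negP => cy; apply: (K_one vK S1 S2 xy cx cy).
  - by apply/negP => cz; apply: (K_one vK S1 S0 xz cx cz).
case cy: (ct v y).
  exists x, z, y; rewrite cx; split => //; first exact: ind3_23.
  by apply/negP => cz; apply: (K_one vK S2 S0 yz cy cz).
by exists x, y, z; rewrite cx cy.
Qed.

Lemma FK f k : f \in Fs -> k \in Ks -> e f k.
Proof.
move=> fF kK; apply/negPn/negP => nfk.
have [a [b [d [I aS bS na nb]]]] := K_nc kK.
move: (fF); rewrite inE => /andP [_ /and3P [efx efy efz]].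
have H : forall s, s \in S3 -> e f s by move=> s; rewrite !inE => /or3P [] /eqP ->.
have efa := H a aS; have efb := H b bS.
move: I => /ind3P [[ab ad bd] [eab ead ebd]].
have [ka eka] := nct na; have [kb ekb] := nct nb.
have kf : k != f by apply/negP => /eqP kf; move: kK; rewrite kf inE fF.
have fa : f != a by apply/negP => /eqP fa; move: efa; rewrite fa irr.
have fb : f != b by apply/negP => /eqP fb; move: efb; rewrite fb irr.
apply: (noP (a := a) (v := f) (b := b) (d := k)).
- by apply: uniq4; by [|rewrite eq_sym].
- by [|rewrite sym].
- exact: efb.
- exact: eab.
- by [|rewrite sym].
- by [|rewrite sym].
- by [|rewrite sym].
Qed.

Lemma ctK u w s : u \in Ks -> w \in Ks -> e u w -> s \in S3 -> ct u s -> ct w s.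
Proof.
move=> uK wK euw sS cus; apply/negPn/negP => ncw.
have [ws ews] := nct ncw.
have us : u != s by apply/negP => /eqP us; move: ews; rewrite -us sym euw.
have eus : e u s by move: cus; rewrite /ct (negbTE us).
have [t1 [t2 [I t1S t2S]]] := others sS.
move: (I) => /ind3P [[st1 st2 t12] [est1 est2 et12]].
have ncu : forall t, t \in S3 -> s != t -> ~~ ct u t.
  by move=> t tS st; apply/negP => cut; apply: (K_one uK sS tS st cus cut).
have [t [tS st ncwt]] : exists t, [/\ t \in S3, s != t & ~~ ct w t].
  case c1: (ct w t1); last by exists t1; rewrite c1.
  case c2: (ct w t2); last by exists t2; rewrite c2.
  by case: (K_one wK t1S t2S t12 c1 c2).
have [ut eut] := nct (ncu t tS st); have [wt ewt] := nct ncwt.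
have uw : u != w by apply/negP => /eqP uw; move: euw; rewrite uw irr.
apply: (noP (a := s) (v := u) (b := w) (d := t)).
- by apply: uniq4; by [|rewrite eq_sym].
- by [|rewrite sym].
- exact: euw.
- by [|rewrite sym].
- by apply: S3ind.
- by [|rewrite sym].
- by [|rewrite sym].
Qed.

Lemma Kcluster u w v : u \in Ks -> w \in Ks -> v \in Ks -> e u w -> e u v -> w != v -> e w v.
Proof.
move=> uK wK vK euw euv wv; apply/negPn/negP => nwv.
have [a [_ [_ [_ aS _ nua _]]]] := K_nc uK.
have nwa : ~~ ct w a.
  by apply: contra nua; apply: ctK wK uK _ aS; rewrite sym.
have nva : ~~ ct v a by apply: contra nua; apply: ctK vK uK _ aS; rewrite sym.
have [ua eua] := nct nua; have [wa ewa] := nct nwa; have [va eva] := nct nva.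
have uw : u != w by apply/negP => /eqP uw; move: euw; rewrite uw irr.
have uv : u != v by apply/negP => /eqP uv; move: euv; rewrite uv irr.
apply: (noP (a := w) (v := u) (b := v) (d := a)).
- by apply: uniq4; by [|rewrite eq_sym].
- by [|rewrite sym].
- exact: euv.
- exact: nwv.
- by [|rewrite sym].
- by [|rewrite sym].
- by [|rewrite sym].
Qed.

Lemma xK : x \in Ks.
Proof. by rewrite !inE xV irr. Qed.
End Decomp.


Lemma reach_proc (T : finType) (e : rel T) (l k : nat) (sym : symmetric e)
  (irr : irreflexive e) (free : P3P1_free e) (c : {ffun T -> 'I_k})
  (pc : proper_colouring e c) (V : {set T}) :
  Proc e l c V (2 * #|V|).
Proof.
have [n] := ubnP #|V|; elim: n V => // n IH V; rewrite ltnS => Vn.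
case: (boolP [exists x in V, exists y in V, exists z in V, ind3 e x y z]); last first.
  move=> /exists_inPn H; apply: (@Proc_le _ _ _ _ _ _ #|V|); last by lia.
  apply: small_proc => // x y z xV yV zV xy xz yz.
  move: (H x xV) => /exists_inPn /(_ y yV) /exists_inPn /(_ z zV).
  by rewrite /ind3 xy xz yz /= !negb_and !negbK orbA.
case/exists_inP => x xV /exists_inP [y yV /exists_inP [z zV I]].
set F := Fs e V x y z; set K := Ks e V x y z.
have FV : F \subset V by apply/subsetP => v; rewrite inE => /andP [].
have VE : V = F :|: K.
  by rewrite /K /Ks -{1}(setID V F) (setIidPr FV).
have cardV : #|V| = #|F| + #|K|.
  by rewrite /K /Ks -(cardsID F V) (setIidPr FV).
have xK : x \in K by apply: xK.
have ltF : #|F| < #|V|.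
  rewrite cardV -[X in X < _]addn0 ltn_add2l card_gt0; apply/set0Pn; by exists x.
have PF := IH F (leq_trans ltF Vn).
have PK : Proc e l c K (2 * #|K|).
  apply: cluster_proc => // u w v uK wK vK; exact: (Kcluster sym irr free I uK wK vK).
have := join sym pc (X := F) (Y := K) _ _ PF PK.
rewrite -VE cardV mulnDr; apply.
- by move=> v vF; rewrite /K /Ks inE vF.
- by move=> f v fF vK; apply: (FK sym irr free I fF vK).
Qed.


Section Rename.
Variables (T : finType) (e : rel T) (l : nat).
Hypothesis sym : symmetric e.
Hypothesis irr : irreflexive e.
Local Notation col := (col T l).
Local Notation reach := (reach e).
Variable d : col.
Hypothesis dl : #|d @: [set: T]| < l.

Definition InvR (g : col) := proper_colouring e g /\ forall u v, (g u == g v) = (d u == d v).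
Definition FR (x : 'I_l) (u : T) : nat :=
  if x == d u then 0 else if x \in d @: [set: T] then 2 else 1.

Lemma setc_part (g : col) u y : (forall w, g w != y) ->
  forall a b, (setc g [set w | g w == g u] y a == setc g [set w | g w == g u] y b) = (g a == g b).
Proof.
move=> yf a b; rewrite !ffunE !inE.
case: (eqVneq (g a) (g u)) => [ga | ga]; case: (eqVneq (g b) (g u)) => [gb | gb] //=.
- by rewrite eqxx ga gb eqxx.
- by rewrite eq_sym (negbTE (yf b)) ga eq_sym (negbTE gb).
- by rewrite (negbTE (yf a)) gb (negbTE ga).
Qed.

Lemma stepR g : InvR g -> (forall v, g v = d v) \/
  exists g1 m, [/\ reach g g1 m, InvR g1, 0 < m & Phi FR [set: T] g1 + m <= Phi FR [set: T] g].
Proof.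
case=> pg gp.
case: (boolP [forall v, g v == d v]) => [/forallP H | /forallPn [u0 nf0]].
  by left => v; apply/eqP.
right.
have classP : forall u y, (forall w, g w != y) ->
  reach g (setc g [set w | g w == g u] y) #|[set w | g w == g u]| /\ InvR (setc g [set w | g w == g u] y).
  move=> u y yf.
  have indX : forall a b, a \in [set w | g w == g u] -> b \in [set w | g w == g u] -> ~~ e a b.
    move=> a b; rewrite !inE => /eqP ga /eqP gb.
    by apply/negP => /(proper_ne pg); rewrite ga gb eqxx.
  have [R P] := reach_setc sym irr pg indX (fun a b _ _ => yf b).
  by split => //; split => // a b; rewrite setc_part.
case: (boolP [exists u, (g u != d u) && [forall w, g w != d u]]).
  case/existsP => u /andP [nfu /forallP uf].
  have [R I] := classP u (d u) uf.
  exists (setc g [set w | g w == g u] (d u)), #|[set w | g w == g u]|; split => //.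
  - by rewrite card_gt0; apply/set0Pn; exists u; rewrite inE.
  - apply: Phi_setc; first exact: subsetT.
    move=> w; rewrite inE => /eqP gw; have dw : d w = d u by apply/eqP; rewrite -gp gw.
    rewrite /FR dw eqxx; have -> : (g w == d u) = false by rewrite gw (negbTE nfu).
    by case: ifP.
move/existsPn => stuck.
have st : forall u, g u != d u -> exists w, g w = d u.
  move=> u nfu; have := stuck u; rewrite nfu /= => /forallPn [w]; rewrite negbK => /eqP gw.
  by exists w.
have [w0 gw0] := st u0 nf0.
have DT : d @: [set: T] \subset g @: [set: T].
  apply/subsetP => t /imsetP [v _ ->].
  case: (eqVneq (g v) (d v)) => [<- | nfv]; first by apply: imset_f.
  by have [w gw] := st v nfv; rewrite -gw imset_f.
have cg : #|g @: [set: T]| = #|d @: [set: T]| by apply: card_part => a b _ _; apply: gp.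
have [y yf yD] : exists2 y, (forall w, g w != y) & y \notin d @: [set: T].
  have : ~~ ([set: 'I_l] \subset g @: [set: T]).
    apply/negP => /subset_leq_card; rewrite cardsT card_ord cg leqNgt.
    by rewrite dl.
  case/subsetPn => y _ yg; exists y.
    by move=> w; apply/negP => /eqP gw; move: yg; rewrite -gw imset_f.
  by apply: contra yg; apply: (subsetP DT).
have [R I] := classP w0 y yf.
exists (setc g [set w | g w == g w0] y), #|[set w | g w == g w0]|; split => //.
- by rewrite card_gt0; apply/set0Pn; exists w0; rewrite inE.
- apply: Phi_setc; first exact: subsetT.
  move=> w; rewrite inE => /eqP gw.
  have dw : d w = d w0 by apply/eqP; rewrite -gp gw.
  have nfw : g w != d w.
    rewrite gw dw; apply/negP => /eqP E.
    have : g u0 == g w0 by rewrite gp -E gw0.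
    by rewrite gw0 (negbTE nf0).
  rewrite /FR (negbTE nfw) gw gw0 (imset_f d (in_setT u0)).
  have -> : (y == d w) = false.
    by apply/negP => /eqP yd; move: yD; rewrite yd imset_f.
  by rewrite (negbTE yD).
Qed.

Lemma rename g : InvR g -> reach g d (2 * #|T|).
Proof.
move=> I0; have [g' [R I F]] := pot_ind stepR I0.
have -> : d = g' by apply/ffunP => v; rewrite F.
apply: reach_le R _; rewrite -cardsT; apply: Phi_le => u _.
by rewrite /FR; case: ifP => //; case: ifP.
Qed.
End Rename.

Theorem theorem6 (T : finType) (e : rel T) (sym : symmetric e)
  (irr : irreflexive e) (l : nat) :
  P3P1_free e -> chi irr + 1 <= l ->
  forall a b : {ffun T -> 'I_l},
    proper_colouring e a -> proper_colouring e b ->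
    exists p : seq {ffun T -> 'I_l},
      recolour_walk e a p b /\ size p <= 6 * #|T|.
Proof.
move=> free; rewrite /chi; case: ex_minnP => m /existsP [c pc] _ ml a b pa pb.
have cl : #|c @: [set: T]| < #|[set: 'I_l]|.
  rewrite cardsT card_ord; apply: leq_ltn_trans (max_card _) _.
  by rewrite card_ord; lia.
have P : Proc e l c [set: T] (2 * #|[set: T]|) by apply: reach_proc.
have outT : forall (g : col T l) v, v \notin [set: T] -> g v \notin [set: 'I_l].
  by move=> g v; rewrite in_setT.
have [a' [Ra pa' _ _ Pa]] := P a [set: 'I_l] pa (fun v _ => in_setT _) (outT a) cl.
have [b' [Rb pb' _ _ Pb]] := P b [set: 'I_l] pb (fun v _ => in_setT _) (outT b) cl.
have dl : #|b' @: [set: T]| < l.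
  have -> : #|b' @: [set: T]| = #|c @: [set: T]| by apply: card_part.
  by move: cl; rewrite cardsT card_ord.
have Rab : reach e a' b' (2 * #|T|).
  apply: rename => //; split => // u v.
  by rewrite Pa ?in_setT // Pb ?in_setT.
have Rbb := reach_sym pb Rb.
have := reach_trans (reach_trans Ra Rab) Rbb.
rewrite cardsT -!mulnDl => -[p [W S]]; by exists p.
Qed.
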